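(* In Algorithm 7 (multi-user adversarial setting described in the context), the expected regret accumulated by the system during one collision resolution phase is upper bounded by $$\frac{K^2M^K}{\gamma}\le\frac{K^2M^KT^{y/2}}{\sqrt{M\ln M}}.$$
   Context: Setting: $K\le M$ users and $M\ge2$ channels, known horizon $T$, slotted synchronized time, no communication. In slot $t$ an adversary assigns each user $k$ and channel $m$ a reward $g^k_t(m)\in[0,1]$; a user that is alone on its chosen channel receives this reward, and if two or more users choose the same channel they all receive $0$ (so per-user per-slot regret is at most $1$). Algorithm 7 with parameter $y\in(0,1)$: let $\phi=\sqrt{\frac{\ln M}{MT^y}}$, $\eta=0.95\sqrt{\frac{\ln M}{MT^y}}$, $\gamma=1.05\sqrt{\frac{M\ln M}{T^y}}$. Each user $k$ keeps a probability vector $p^k$ over channels, initially uniform. The horizon is split into $T^y$ blocks of $T^{1-y}$ slots. At the start of a block there is a collision resolution phase: in each slot each not-yet-fixed user draws a channel from $p^k$; if it experiences no collision it becomes fixed and keeps that channel for the rest of the block. After the block, with $a$ the fixed channel and $g'^k(i)$ the average reward of channel $a$ over the remaining slots of the block, the user sets $\tilde g^k(i)=\frac{g'^k(i)\mathbb 1_{a=i}+\phi}{p^k(i)}$, adds it to the cumulative gain $\tilde G^k(i)$, and updates $p^k(i)=(1-\gamma)\frac{\exp(\eta\tilde G^k(i))}{\sum_{m=1}^M\exp(\eta\tilde G^k(m))}+\frac{\gamma}{M}$. The collision resolution phase lasts until all users are fixed. *)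

(* Defs.v *)
From HB Require Import structures.
From mathcomp Require Import all_boot all_order all_algebra.
From mathcomp Require Import all_classical all_reals all_analysis.
Set Implicit Arguments. Unset Strict Implicit. Unset Printing Implicit Defensive.
Import Order.TTheory GRing.Theory Num.Theory.
Local Open Scope ring_scope.

Definition alg7_gamma (R : realType) (M T : nat) (y : R) : R :=
  (105%:R / 100%:R) * Num.sqrt (M%:R * ln (M%:R : R) / ((T%:R : R) `^ y)).
Definition alg7_eta (R : realType) (M T : nat) (y : R) : R :=
  (95%:R / 100%:R) * Num.sqrt (ln (M%:R : R) / (M%:R * (T%:R : R) `^ y)).

(* The channel distribution p^k(i) of user k, given the cumulative
   estimated gains G k i (\tilde G^k(i)). *)
Definition alg7_prob (R : realType) (K M T : nat) (y : R)
    (G : 'I_K -> 'I_M -> R) (k : 'I_K) (i : 'I_M) : R :=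
  (1 - alg7_gamma M T y) *
    (expR (alg7_eta M T y * G k i) /
       \sum_(m < M) expR (alg7_eta M T y * G k m))
  + alg7_gamma M T y / M%:R.

(* State of a collision resolution phase: for each user, its fixed
   channel (Some m) or None if not yet fixed. *)
Definition crstate (K M : nat) := {ffun 'I_K -> option 'I_M}.
Definition crinit (K M : nat) : crstate K M := [ffun _ => None].
Definition all_fixed (K M : nat) (s : crstate K M) : bool :=
  [forall k, s k != None].

(* c = vector of channels actually played in a slot. *)
Definition alone (K M : nat) (c : {ffun 'I_K -> 'I_M}) (k : 'I_K) : bool :=
  [forall j, (j != k) ==> (c j != c k)].

Definition crstep (K M : nat) (s : crstate K M) (c : {ffun 'I_K -> 'I_M})
  : crstate K M :=
  [ffun k => if s k is Some m then Some m
             else if alone c k then Some (c k) else None].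

(* Probability that the played vector is c in state s: fixed users play
   their fixed channel, unfixed users draw independently from p k. *)
Definition crweight (R : realType) (K M : nat) (p : 'I_K -> 'I_M -> R)
    (s : crstate K M) (c : {ffun 'I_K -> 'I_M}) : R :=
  \prod_(k < K) (if s k is Some m then (c k == m)%:R else p k (c k)).

(* Law of the state at the start of slot n of the phase. *)
Fixpoint crdist (R : realType) (K M : nat) (p : 'I_K -> 'I_M -> R) (n : nat)
  : {ffun crstate K M -> R} :=
  match n with
  | 0 => [ffun s => (s == crinit K M)%:R]
  | n'.+1 => [ffun s' => \sum_(s : crstate K M) \sum_(c : {ffun 'I_K -> 'I_M})
                 crdist p n' s * crweight p s c * (crstep s c == s')%:R]
  end.

(* System regret in slot t (counted from the start of the phase) against
   a comparator allocation a, rewards g t k m in [0,1]; a user receives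
   its reward only if alone on its channel. *)
Definition slot_regret (R : realType) (K M : nat)
    (g : nat -> 'I_K -> 'I_M -> R) (a : 'I_K -> 'I_M) (t : nat)
    (c : {ffun 'I_K -> 'I_M}) : R :=
  \sum_(k < K) (g t k (a k) - (if alone c k then g t k (c k) else 0)).

(* Expected regret accumulated during the slots t < N that belong to the
   collision resolution phase (i.e. the state at the start of t is not
   all-fixed). *)
Definition phase_regret (R : realType) (K M : nat) (p : 'I_K -> 'I_M -> R)
    (g : nat -> 'I_K -> 'I_M -> R) (a : 'I_K -> 'I_M) (N : nat) : R :=
  \sum_(t < N) \sum_(s : crstate K M | ~~ all_fixed s)
     \sum_(c : {ffun 'I_K -> 'I_M})
       crdist p t s * crweight p s c * slot_regret g a t c.

(* Main.v *)
Require Import Defs.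
From HB Require Import structures.
From mathcomp Require Import all_boot all_order all_algebra.
From mathcomp Require Import all_classical all_reals all_analysis.
From mathcomp Require Import lra ring.
Set Implicit Arguments. Unset Strict Implicit. Unset Printing Implicit Defensive.
Import Order.TTheory GRing.Theory Num.Theory.
Local Open Scope ring_scope.

Lemma crweight_ge0 (R : realType) K M (p : 'I_K -> 'I_M -> R) s c :
  (forall k m, 0 <= p k m) -> 0 <= crweight p s c.
Proof.
move=> hp; apply: prodr_ge0 => k _; case: (s k) => [m|]; [exact: ler0n|exact: hp].
Qed.

Lemma crdist_ge0 (R : realType) K M (p : 'I_K -> 'I_M -> R) n s :
  (forall k m, 0 <= p k m) -> 0 <= crdist p n s.
Proof.
move=> hp; elim: n s => [|n IH] s /=; rewrite ffunE; first by rewrite ler0n.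
apply: sumr_ge0 => s0 _; apply: sumr_ge0 => c _.
by rewrite !mulr_ge0 ?IH ?crweight_ge0 ?ler0n.
Qed.

Lemma sum_crweight (R : realType) K M (p : 'I_K -> 'I_M -> R) s :
  (forall k, \sum_m p k m = 1) -> \sum_c crweight p s c = 1.
Proof.
move=> hs; rewrite /crweight.
pose F k m := if s k is Some m0 then ((m == m0)%:R : R) else p k m.
have -> : \sum_(c : {ffun 'I_K -> 'I_M}) \prod_(k < K) (if s k is Some m then (c k == m)%:R else p k (c k))
   = \sum_(c : {ffun 'I_K -> 'I_M}) \prod_(k < K) F k (c k) by [].
rewrite -bigA_distr_bigA /= big1 // => k _; rewrite /F.
case: (s k) => [m0|]; last exact: hs.
by rewrite (bigD1 m0) //= eqxx big1 ?addr0 // => m /negbTE ->.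
Qed.

Lemma slot_regret_le (R : realType) K M (g : nat -> 'I_K -> 'I_M -> R) a t c :
  (forall t k m, 0 <= g t k m <= 1) -> slot_regret g a t c <= K%:R.
Proof.
move=> hg; rewrite /slot_regret.
apply: le_trans (_ : \sum_(k < K) (1 : R) <= _); last by rewrite sumr_const card_ord.
apply: ler_sum => k _; have /andP [_ h1] := hg t k (a k).
case: (alone c k); last by rewrite subr0.
have /andP [h0 _] := hg t k (c k); lra.
Qed.

Definition unf (R : realType) K M (s : crstate K M) : R :=
  \sum_(k < K) ((s k == None)%:R : R).
Definition prog K M (s : crstate K M) (c : {ffun 'I_K -> 'I_M}) : bool :=
  [exists k, (s k == None) && alone c k].

Lemma unf_step (R : realType) K M (s : crstate K M) c :
  unf R (crstep s c) + (prog s c)%:R <= unf R s.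
Proof.
rewrite /unf /prog.
case: existsP => [[k0 /andP [hk0 hal]] | _]; last first.
  rewrite addr0; apply: ler_sum => k _; rewrite /crstep ffunE.
  by case: (s k) => [m|] //=; case: (alone c k).
rewrite (bigD1 k0) //= [X in _ <= X](bigD1 k0) //= /crstep ffunE.
rewrite (eqP hk0) hal /=.
set A := \sum_(i < K | i != k0) _. set B := \sum_(i < K | i != k0) _.
suff : A <= B by rewrite mulr0n; lra.
apply: ler_sum => k _; rewrite ffunE.
by case: (s k) => [m|] //=; case: (alone c k).
Qed.
Lemma progress_lb (R : realType) K M (p : 'I_K -> 'I_M -> R) (gam : R)
    (s : crstate K M) :
  (K <= M)%N -> (0 < M)%N -> 0 <= gam ->
  (forall k m, gam / M%:R <= p k m) ->
  (forall k, exists m, M%:R^-1 <= p k m) ->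
  ~~ all_fixed s ->
  gam * (M%:R^-1) ^+ K <= \sum_c crweight p s c * (prog s c)%:R.
Proof.
move=> hKM hM hgam hp hex /forallPn [k0]; rewrite negbK => /eqP hk0.
have hM0 : (0 : R) < M%:R by rewrite ltr0n.
have hp0 : forall k m, 0 <= p k m.
  by move=> k m; apply: le_trans (hp k m); rewrite divr_ge0 // ltW.
have [mj hmj] := fin_all_exists hex.
pose f j := if s j is Some m then m else mj j.
pose S := [set f j | j in [pred j | j != k0]].
have hS : (#|S| < M)%N.
  apply: leq_ltn_trans (leq_imset_card _ _) _.
  have := cardC1 k0; rewrite card_ord => ->.
  have hK : (0 < K)%N by clear -k0; case: (K) k0 => [[]|].
  by rewrite -(prednK hK) in hKM *.
have /card_gt0P [c0 hc0] : (0 < #|~: S|)%N.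
  have := cardsC S; rewrite card_ord => e.
  by rewrite lt0n; apply/eqP => h; rewrite h addn0 in e; rewrite e ltnn in hS.
pose cs : {ffun 'I_K -> 'I_M} := [ffun j => if j == k0 then c0 else f j].
have hal : alone cs k0.
  apply/forallP => j; apply/implyP => hj; rewrite !ffunE (negbTE hj) eqxx.
  apply/negP => /eqP e; move: hc0; rewrite inE -e.
  by rewrite (imset_f f (D := [pred j | j != k0])).
have hprog : prog s cs by apply/existsP; exists k0; rewrite hk0 eqxx hal.
rewrite (bigD1 cs) //= hprog mulr1 -[X in X <= _]addr0.
apply: lerD; last first.
  by apply: sumr_ge0 => c _; rewrite mulr_ge0 ?ler0n ?crweight_ge0.
pose h k := if k == k0 then gam / M%:R else M%:R^-1.
apply: le_trans (_ : \prod_(k < K) h k <= _).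
  rewrite (bigD1 k0) //= /h eqxx.
  have -> : (M%:R^-1 : R) ^+ K = \prod_(k < K) M%:R^-1.
    by rewrite prodr_const card_ord.
  rewrite (bigD1 k0) //= mulrA.
  rewrite le_eqVlt; apply/orP; left; apply/eqP; congr (_ * _).
  by apply: eq_bigr => k /negbTE ->.
apply: ler_prod => k _; apply/andP; split.
  rewrite /h; case: ifP => _; [apply: divr_ge0 => //; exact: ltW|].
  by rewrite invr_ge0; exact: ltW.
rewrite /h ffunE; case: ifP => [/eqP -> | hk]; first by rewrite hk0; exact: hp.
rewrite /f; case: (s k) => [m|]; last exact: hmj.
by rewrite eqxx invf_le1 // ler1n.
Qed.

Definition Ed (R : realType) K M (p : 'I_K -> 'I_M -> R) n : R :=
  \sum_(s : crstate K M) crdist p n s * unf R s.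
Definition Pd (R : realType) K M (p : 'I_K -> 'I_M -> R) n : R :=
  \sum_(s : crstate K M | ~~ all_fixed s) crdist p n s.

Lemma E_step (R : realType) K M (p : 'I_K -> 'I_M -> R) (q : R) n :
  (forall k m, 0 <= p k m) -> (forall k, \sum_m p k m = 1) ->
  (forall s, ~~ all_fixed s -> q <= \sum_c crweight p s c * (prog s c)%:R) ->
  Ed p n.+1 + q * Pd p n <= Ed p n.
Proof.
move=> hp0 hs hq.
have E1 : Ed p n.+1 = \sum_(s : crstate K M) \sum_(c : {ffun 'I_K -> 'I_M})
     crdist p n s * crweight p s c * unf R (crstep s c).
  rewrite /Ed.
  transitivity (\sum_(s' : crstate K M) \sum_(s : crstate K M)
     \sum_(c : {ffun 'I_K -> 'I_M})
     crdist p n s * crweight p s c * (crstep s c == s')%:R * unf R s').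
    apply: eq_bigr => s' _; rewrite /= ffunE big_distrl; apply: eq_bigr => s _.
    by rewrite big_distrl.
  rewrite exchange_big; apply: eq_bigr => s _; rewrite exchange_big.
  apply: eq_bigr => c _.
  rewrite (bigD1 (crstep s c)) //= eqxx mulr1 big1 ?addr0 // => s' hs'.
  by rewrite eq_sym (negbTE hs') mulr0 mul0r.
have E0 : Ed p n = \sum_(s : crstate K M) \sum_(c : {ffun 'I_K -> 'I_M})
     crdist p n s * crweight p s c * unf R s.
  apply: eq_bigr => s _; rewrite -big_distrl /= -big_distrr /=.
  by rewrite sum_crweight // mulr1.
have P : q * Pd p n <= \sum_(s : crstate K M) \sum_(c : {ffun 'I_K -> 'I_M})
     crdist p n s * crweight p s c * (prog s c)%:R.
  rewrite /Pd big_distrr /=.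
  apply: le_trans (_ : \sum_(s : crstate K M | ~~ all_fixed s)
     \sum_(c : {ffun 'I_K -> 'I_M})
     crdist p n s * crweight p s c * (prog s c)%:R <= _).
    apply: ler_sum => s hs'.
    under eq_bigr do rewrite -mulrA.
    rewrite -big_distrr /= mulrC; apply: ler_wpM2l; first exact: crdist_ge0.
    exact: hq.
  rewrite [X in _ <= X](bigID (fun s => ~~ all_fixed s)) /= lerDl.
  apply: sumr_ge0 => s _; apply: sumr_ge0 => c _.
  by rewrite !mulr_ge0 ?ler0n ?crweight_ge0 ?crdist_ge0.
rewrite E1 E0; apply: le_trans (lerD (le_refl _) P) _.
rewrite -big_split; apply: ler_sum => s _ /=.
rewrite -big_split; apply: ler_sum => c _ /=.
rewrite -mulrDr; apply: ler_wpM2l; last exact: unf_step.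
by rewrite mulr_ge0 ?crweight_ge0 ?crdist_ge0.
Qed.

Lemma Ed_ge0 (R : realType) K M (p : 'I_K -> 'I_M -> R) n :
  (forall k m, 0 <= p k m) -> 0 <= Ed p n.
Proof.
move=> hp; apply: sumr_ge0 => s _; rewrite mulr_ge0 ?crdist_ge0 //.
by apply: sumr_ge0 => k _; rewrite ler0n.
Qed.

Lemma Ed0 (R : realType) K M (p : 'I_K -> 'I_M -> R) : Ed p 0 = K%:R.
Proof.
rewrite /Ed (bigD1 (crinit K M)) //= ffunE eqxx mul1r big1 ?addr0.
  rewrite /unf (eq_bigr (fun _ => 1)) ?sumr_const ?card_ord //.
  by move=> k _; rewrite /crinit ffunE eqxx.
by move=> s hs; rewrite ffunE (negbTE hs) mul0r.
Qed.

Lemma telescope_bound (R : realType) K M (p : 'I_K -> 'I_M -> R) (q : R) N :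
  (forall k m, 0 <= p k m) -> (forall k, \sum_m p k m = 1) ->
  (forall s, ~~ all_fixed s -> q <= \sum_c crweight p s c * (prog s c)%:R) ->
  q * \sum_(t < N) Pd p t <= K%:R.
Proof.
move=> hp0 hs hq.
suff : q * \sum_(t < N) Pd p t <= Ed p 0 - Ed p N.
  by rewrite Ed0; have := Ed_ge0 N hp0; lra.
elim: N => [|N IH]; first by rewrite big_ord0 mulr0 subrr.
rewrite big_ord_recr /= mulrDr.
have := E_step N hp0 hs hq; lra.
Qed.

Lemma regret_bound (R : realType) K M (p : 'I_K -> 'I_M -> R)
   (g : nat -> 'I_K -> 'I_M -> R) a N :
  (forall k m, 0 <= p k m) -> (forall k, \sum_m p k m = 1) ->
  (forall t k m, 0 <= g t k m <= 1) ->
  phase_regret p g a N <= K%:R * \sum_(t < N) Pd p t.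
Proof.
move=> hp0 hs hg; rewrite /phase_regret big_distrr; apply: ler_sum => t _.
rewrite /Pd big_distrr; apply: ler_sum => s _ /=.
apply: le_trans (_ : \sum_c crdist p t s * crweight p s c * K%:R <= _).
  apply: ler_sum => c _; apply: ler_wpM2l; last exact: slot_regret_le.
  by rewrite mulr_ge0 ?crweight_ge0 ?crdist_ge0.
by rewrite -big_distrl -big_distrr /= sum_crweight // mulr1 mulrC.
Qed.

Lemma prob_facts (R : realType) K M T (y : R) (G : 'I_K -> 'I_M -> R) :
  (2 <= M)%N -> 0 <= alg7_gamma M T y <= 1 ->
  let p := alg7_prob T y G in let gam := alg7_gamma M T y in
  [/\ forall k m, gam / M%:R <= p k m,
      forall k, \sum_m p k m = 1 &
      forall k, exists m, M%:R^-1 <= p k m].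
Proof.
move=> hM /andP [hg0 hg1] p gam.
have hM0 : (0 < M)%N by apply: leq_trans hM.
have hMR : (0 : R) < M%:R by rewrite ltr0n.
have hpos : forall k, 0 < \sum_(m < M) expR (alg7_eta M T y * G k m).
  move=> k; rewrite (bigD1 (Ordinal hM0)) //=; apply: ltr_wpDr.
    by apply: sumr_ge0 => m _; exact: ltW (expR_gt0 _).
  exact: expR_gt0.
have hlb : forall k m, gam / M%:R <= p k m.
  move=> k m; rewrite /p /alg7_prob lerDr; apply: mulr_ge0; first by rewrite subr_ge0.
  by rewrite divr_ge0 ?ltW ?expR_gt0 ?hpos.
have hsum : forall k, \sum_m p k m = 1.
  move=> k; rewrite /p /alg7_prob -/gam big_split /= -big_distrr /= -big_distrl /=.
  rewrite divff ?gt_eqF ?hpos // mulr1 sumr_const card_ord.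
  have -> : gam / M%:R *+ M = gam / M%:R * M%:R by rewrite mulr_natr.
  rewrite divfK ?gt_eqF //; lra.
split => // k.
case: (boolP [exists m, M%:R^-1 <= p k m]) => [/existsP //|/existsPn hall].
exfalso.
have : \sum_m p k m < \sum_(m < M) M%:R^-1.
  apply: ltr_sum; first by apply/hasP; exists (Ordinal hM0); rewrite ?mem_index_enum.
  by move=> m _; rewrite ltNge; exact: hall.
rewrite hsum sumr_const card_ord.
have -> : (M%:R^-1 : R) *+ M = M%:R^-1 * M%:R by rewrite mulr_natr.
by rewrite mulVf ?gt_eqF // ltxx.
Qed.

Unset Implicit Arguments.
Theorem theorem4 (R : realType) (K M T : nat) (y : R)
    (G : 'I_K -> 'I_M -> R) (g : nat -> 'I_K -> 'I_M -> R)
    (a : 'I_K -> 'I_M) :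
  (2 <= M)%N -> (K <= M)%N -> (1 <= T)%N -> 0 < y < 1 ->
  alg7_gamma M T y <= 1 ->
  (forall t k m, 0 <= g t k m <= 1) ->
  (forall N : nat,
     phase_regret (alg7_prob T y G) g a N
       <= K%:R ^+ 2 * M%:R ^+ K / alg7_gamma M T y) /\
  K%:R ^+ 2 * M%:R ^+ K / alg7_gamma M T y
    <= K%:R ^+ 2 * M%:R ^+ K * (T%:R : R) `^ (y / 2)
         / Num.sqrt (M%:R * ln (M%:R : R)).
Proof.
move=> hM hKM hT hy hg1 hg.
have hM0 : (0 < M)%N by apply: leq_trans hM.
have hMR : (0 : R) < M%:R by rewrite ltr0n.
have hX : (0 : R) < M%:R * ln (M%:R : R).
  by rewrite mulr_gt0 // ln_gt0 // ltr1n.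
have hY : (0 : R) < (T%:R : R) `^ y by rewrite powR_gt0 // ltr0n.
have hgam : 0 < alg7_gamma M T y.
  by rewrite /alg7_gamma mulr_gt0 // ?sqrtr_gt0 ?divr_gt0.
split.
  move=> N.
  have hg01 : 0 <= alg7_gamma M T y <= 1 by rewrite ltW.
  have [hlb hsum hex] := prob_facts G hM hg01.
  set p := alg7_prob T y G in hlb hsum hex *.
  set gam := alg7_gamma M T y in hlb hsum hex hgam *.
  have hp0 : forall k m, 0 <= p k m.
    by move=> k m; apply: le_trans (hlb k m); rewrite divr_ge0 // ltW.
  have hq := progress_lb hKM hM0 (ltW hgam) hlb hex.
  have hS := telescope_bound N hp0 hsum hq.
  have hR := regret_bound a N hp0 hsum hg.
  apply: le_trans hR _.
  set S := \sum_(t < N) Pd p t in hS *.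
  have hq0 : 0 < gam * M%:R^-1 ^+ K by rewrite mulr_gt0 // exprn_gt0 // invr_gt0.
  have hS' : S <= K%:R / (gam * M%:R^-1 ^+ K).
    by rewrite -(ler_pM2l hq0) [X in _ <= X]mulrC divfK ?gt_eqF.
  apply: le_trans (ler_wpM2l (ler0n _ _) hS') _.
  rewrite exprVn le_eqVlt; apply/orP; left; apply/eqP.
  by field; rewrite /= expf_neq0 // gt_eqF.
have e1 : (T%:R : R) `^ (y / 2) = Num.sqrt ((T%:R : R) `^ y).
  by rewrite powRrM powR12_sqrt // ltW.
have e2 : Num.sqrt (M%:R * ln (M%:R : R) / (T%:R : R) `^ y)
    = Num.sqrt (M%:R * ln (M%:R : R)) / Num.sqrt ((T%:R : R) `^ y).
  by rewrite sqrtrM ?ltW // sqrtrV // ltW.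
rewrite /alg7_gamma e1 e2.
set A := K%:R ^+ 2 * M%:R ^+ K.
set sX := Num.sqrt (M%:R * ln (M%:R : R)).
set sY := Num.sqrt ((T%:R : R) `^ y).
have hsX : 0 < sX by rewrite sqrtr_gt0.
have hsY : 0 < sY by rewrite sqrtr_gt0.
have hA : 0 <= A by rewrite mulr_ge0 // exprn_ge0.
have -> : A / (105%:R / 100%:R * (sX / sY)) = (A * sY / sX) * (100%:R / 105%:R).
  by field; rewrite /= !gt_eqF.
apply: ler_piMr; first by apply: divr_ge0; [apply: mulr_ge0 => //; exact: ltW | exact: ltW].
by rewrite ler_pdivrMr ?ltr0n // mul1r ler_nat.
Qed.
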